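(* For every $n\ge1$, $$\mathbf{G}^{[n-1]}_{\mathrm{o}/\mathrm{e}}(\lambda;0,0)\cdots\mathbf{G}^{[0]}_{\mathrm{o}/\mathrm{e}}(\lambda;0,0)=\mathbf{G}^{[0]}_{\mathrm{o}/\mathrm{e}}(\lambda;0,0)^n,$$ where $\mathbf{G}^{[0]}_{\mathrm{o}}(\lambda;0,0)=\mathbb{I}+\frac{\mathbf{H}}{\lambda-\mathrm{i}}-\frac{\mathbf{K}}{\lambda+\mathrm{i}}$ and $\mathbf{G}^{[0]}_{\mathrm{e}}(\lambda;0,0)=\mathbb{I}+\frac{\mathbf{K}}{\lambda-\mathrm{i}}-\frac{\mathbf{H}}{\lambda+\mathrm{i}}$ with $\mathbf{H}=\mathrm{i}\begin{bmatrix}1&1\\1&1\end{bmatrix}$, $\mathbf{K}=\mathrm{i}\begin{bmatrix}1&-1\\-1&1\end{bmatrix}$. Explicitly, $$\mathbf{G}^{[0]}_{\mathrm{o}}(\lambda;0,0)^n=\mathbb{I}+\sum_{k=1}^n\binom nk(2\mathrm{i})^{k-1}\Big[\frac{\mathbf{H}}{(\lambda-\mathrm{i})^k}+\frac{(-1)^k\mathbf{K}}{(\lambda+\mathrm{i})^k}\Big],\quad \mathbf{G}^{[0]}_{\mathrm{e}}(\lambda;0,0)^n=\mathbb{I}+\sum_{k=1}^n\binom nk(2\mathrm{i})^{k-1}\Big[\frac{\mathbf{K}}{(\lambda-\mathrm{i})^k}+\frac{(-1)^k\mathbf{H}}{(\lambda+\mathrm{i})^k}\Big].$$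
   Context: $\sigma_2=\begin{bmatrix}0&-\mathrm{i}\\\mathrm{i}&0\end{bmatrix}$. Let $\mathbf{c}_{\infty,\mathrm{o}}=(1,-1)^\top$, $\mathbf{c}_{\infty,\mathrm{e}}=(1,1)^\top$. Recursively (for a fixed choice o or e): $\psi^{[0]}\equiv1$; given the global classical NLS solution $\psi^{[n]}$ (of $\mathrm{i}\psi_t+\frac12\psi_{xx}+(|\psi|^2-1)\psi=0$), $\mathbf{U}^{[n]}(\lambda;x,t)$ is the unique simultaneous fundamental solution of $\mathbf{U}_x=\begin{bmatrix}-\mathrm{i}\lambda&\psi^{[n]}\\-\psi^{[n]*}&\mathrm{i}\lambda\end{bmatrix}\mathbf{U}$, $\mathbf{U}_t=\begin{bmatrix}-\mathrm{i}\lambda^2+\frac{\mathrm{i}}2(|\psi^{[n]}|^2-1)&\lambda\psi^{[n]}+\frac{\mathrm{i}}2\psi^{[n]}_x\\-\lambda\psi^{[n]*}+\frac{\mathrm{i}}2\psi^{[n]*}_x&\mathrm{i}\lambda^2-\frac{\mathrm{i}}2(|\psi^{[n]}|^2-1)\end{bmatrix}\mathbf{U}$ with $\mathbf{U}^{[n]}(\lambda;0,0)=\mathbb{I}$; $\mathbf{s}=\mathbf{U}^{[n]}(\mathrm{i};x,t)\mathbf{c}_\infty$, $\mathbf{s}'=\partial_\lambda\mathbf{U}^{[n]}(\mathrm{i};x,t)\mathbf{c}_\infty$, $N=\mathbf{s}^\dagger\mathbf{s}$, $w=\mathbf{s}^\top\sigma_2\mathbf{s}'$, $\mathbf{Y}^{[n]}_\infty=[-4w^*\mathbf{s}\mathbf{s}^\top\sigma_2+2\mathrm{i}N\sigma_2\mathbf{s}^*\mathbf{s}^\top\sigma_2]/(4|w|^2+N^2)$,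 $\mathbf{Z}^{[n]}_\infty=\sigma_2(\mathbf{Y}^{[n]}_\infty)^*\sigma_2$, $\mathbf{G}^{[n]}(\lambda;x,t)=\mathbb{I}+\mathbf{Y}^{[n]}_\infty/(\lambda-\mathrm{i})+\mathbf{Z}^{[n]}_\infty/(\lambda+\mathrm{i})$, and $\psi^{[n+1]}=\psi^{[n]}+2\mathrm{i}(Y^{[n]}_{\infty,12}-(Y^{[n]}_{\infty,21})^* )$. Subscripts o/e indicate $\mathbf{c}_\infty=\mathbf{c}_{\infty,\mathrm{o}}$ or $\mathbf{c}_{\infty,\mathrm{e}}$. *)

(* Defs.v *)
From Stdlib Require Import Reals.
Open Scope R_scope.

Record Cx := mkCx { Re : R; Im : R }.
Definition Czero : Cx := mkCx 0 0.
Definition Cone : Cx := mkCx 1 0.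
Definition Ci : Cx := mkCx 0 1.
Definition RtoC (r : R) : Cx := mkCx r 0.
Definition Cadd (z w : Cx) : Cx := mkCx (Re z + Re w) (Im z + Im w).
Definition Cneg (z : Cx) : Cx := mkCx (- Re z) (- Im z).
Definition Csub (z w : Cx) : Cx := Cadd z (Cneg w).
Definition Cmul (z w : Cx) : Cx :=
  mkCx (Re z * Re w - Im z * Im w) (Re z * Im w + Im z * Re w).
Definition Cconj (z : Cx) : Cx := mkCx (Re z) (- Im z).
Definition Cnorm2 (z : Cx) : R := Re z * Re z + Im z * Im z.
Definition Cmod (z : Cx) : R := sqrt (Cnorm2 z).
Definition Cinv (z : Cx) : Cx :=
  mkCx (Re z / Cnorm2 z) (- Im z / Cnorm2 z).
Definition Cdiv (z w : Cx) : Cx := Cmul z (Cinv w).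
Fixpoint Cpow (z : Cx) (n : nat) : Cx :=
  match n with O => Cone | S m => Cmul z (Cpow z m) end.

Record M2 := mkM2 { e11 : Cx; e12 : Cx; e21 : Cx; e22 : Cx }.
Record V2 := mkV2 { v1 : Cx; v2 : Cx }.

Definition Mid : M2 := mkM2 Cone Czero Czero Cone.
Definition Madd (A B : M2) : M2 :=
  mkM2 (Cadd (e11 A) (e11 B)) (Cadd (e12 A) (e12 B))
       (Cadd (e21 A) (e21 B)) (Cadd (e22 A) (e22 B)).
Definition Mscale (c : Cx) (A : M2) : M2 :=
  mkM2 (Cmul c (e11 A)) (Cmul c (e12 A)) (Cmul c (e21 A)) (Cmul c (e22 A)).
Definition Mmul (A B : M2) : M2 :=
  mkM2 (Cadd (Cmul (e11 A) (e11 B)) (Cmul (e12 A) (e21 B)))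
       (Cadd (Cmul (e11 A) (e12 B)) (Cmul (e12 A) (e22 B)))
       (Cadd (Cmul (e21 A) (e11 B)) (Cmul (e22 A) (e21 B)))
       (Cadd (Cmul (e21 A) (e12 B)) (Cmul (e22 A) (e22 B))).
Definition Mconj (A : M2) : M2 :=
  mkM2 (Cconj (e11 A)) (Cconj (e12 A)) (Cconj (e21 A)) (Cconj (e22 A)).
Fixpoint Mpow (A : M2) (n : nat) : M2 :=
  match n with O => Mid | S m => Mmul A (Mpow A m) end.
Definition MV (A : M2) (v : V2) : V2 :=
  mkV2 (Cadd (Cmul (e11 A) (v1 v)) (Cmul (e12 A) (v2 v)))
       (Cadd (Cmul (e21 A) (v1 v)) (Cmul (e22 A) (v2 v))).
Definition Vconj (v : V2) : V2 := mkV2 (Cconj (v1 v)) (Cconj (v2 v)).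
(* u^T v (bilinear, no conjugation) *)
Definition VdotT (u v : V2) : Cx := Cadd (Cmul (v1 u) (v1 v)) (Cmul (v2 u) (v2 v)).
Definition outer (u v : V2) : M2 :=
  mkM2 (Cmul (v1 u) (v1 v)) (Cmul (v1 u) (v2 v))
       (Cmul (v2 u) (v1 v)) (Cmul (v2 u) (v2 v)).

Definition sigma2 : M2 := mkM2 Czero (Cneg Ci) Ci Czero.

Definition c_inf (odd : bool) : V2 :=
  if odd then mkV2 Cone (Cneg Cone) else mkV2 Cone Cone.

Definition Yinf (s s' : V2) : M2 :=
  let N := VdotT (Vconj s) s in
  let w := VdotT s (MV sigma2 s') in
  Mscale (Cinv (Cadd (Cmul (RtoC 4) (RtoC (Cnorm2 w))) (Cmul N N)))
    (Madd (Mscale (Cmul (Cneg (RtoC 4)) (Cconj w)) (Mmul (outer s s) sigma2))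
          (Mscale (Cmul (Cmul (RtoC 2) Ci) N)
                  (Mmul (Mmul sigma2 (outer (Vconj s) s)) sigma2))).

Definition Zinf (Y : M2) : M2 := Mmul (Mmul sigma2 (Mconj Y)) sigma2.

Definition Gmat (Y : M2) (lam : Cx) : M2 :=
  Madd Mid (Madd (Mscale (Cinv (Csub lam Ci)) Y)
                 (Mscale (Cinv (Cadd lam Ci)) (Zinf Y))).

Definition Cderiv_R (f : R -> Cx) (x : R) (l : Cx) : Prop :=
  derivable_pt_lim (fun y => Re (f y)) x (Re l) /\
  derivable_pt_lim (fun y => Im (f y)) x (Im l).
Definition Mderiv_R (f : R -> M2) (x : R) (L : M2) : Prop :=
  Cderiv_R (fun y => e11 (f y)) x (e11 L) /\ Cderiv_R (fun y => e12 (f y)) x (e12 L) /\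
  Cderiv_R (fun y => e21 (f y)) x (e21 L) /\ Cderiv_R (fun y => e22 (f y)) x (e22 L).
Definition Cderiv_C (f : Cx -> Cx) (z l : Cx) : Prop :=
  forall eps, 0 < eps -> exists delta, 0 < delta /\
    forall h, h <> Czero -> Cmod h < delta ->
      Cmod (Csub (Cdiv (Csub (f (Cadd z h)) (f z)) h) l) < eps.
Definition Mderiv_C (f : Cx -> M2) (z : Cx) (L : M2) : Prop :=
  Cderiv_C (fun y => e11 (f y)) z (e11 L) /\ Cderiv_C (fun y => e12 (f y)) z (e12 L) /\
  Cderiv_C (fun y => e21 (f y)) z (e21 L) /\ Cderiv_C (fun y => e22 (f y)) z (e22 L).
Definition Ccont2 (f : R -> R -> Cx) : Prop :=
  forall x t eps, 0 < eps -> exists delta, 0 < delta /\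
    forall x' t', Rabs (x' - x) < delta -> Rabs (t' - t) < delta ->
      Cmod (Csub (f x' t') (f x t)) < eps.

Definition NLS_classical (psi psix psixx psit : R -> R -> Cx) : Prop :=
  (forall x t, Cderiv_R (fun y => psi y t) x (psix x t)) /\
  (forall x t, Cderiv_R (fun y => psix y t) x (psixx x t)) /\
  (forall x t, Cderiv_R (fun s => psi x s) t (psit x t)) /\
  Ccont2 psi /\ Ccont2 psix /\ Ccont2 psixx /\ Ccont2 psit /\
  (forall x t,
     Cadd (Cadd (Cmul Ci (psit x t)) (Cmul (RtoC (1/2)) (psixx x t)))
          (Cmul (RtoC (Cnorm2 (psi x t) - 1)) (psi x t)) = Czero).

Definition LaxX (psi : R -> R -> Cx) (lam : Cx) (x t : R) : M2 :=
  mkM2 (Cneg (Cmul Ci lam)) (psi x t) (Cneg (Cconj (psi x t))) (Cmul Ci lam).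

Definition LaxT (psi psix : R -> R -> Cx) (lam : Cx) (x t : R) : M2 :=
  let q := Cmul (Cmul (RtoC (1/2)) Ci) (RtoC (Cnorm2 (psi x t) - 1)) in
  mkM2 (Cadd (Cneg (Cmul Ci (Cmul lam lam))) q)
       (Cadd (Cmul lam (psi x t)) (Cmul (Cmul (RtoC (1/2)) Ci) (psix x t)))
       (Cadd (Cneg (Cmul lam (Cconj (psi x t))))
             (Cmul (Cmul (RtoC (1/2)) Ci) (Cconj (psix x t))))
       (Csub (Cmul Ci (Cmul lam lam)) q).

Definition FundSol (psi psix : R -> R -> Cx) (U : Cx -> R -> R -> M2) : Prop :=
  (forall lam x t, Mderiv_R (fun y => U lam y t) x (Mmul (LaxX psi lam x t) (U lam x t))) /\
  (forall lam x t, Mderiv_R (fun s => U lam x s) t (Mmul (LaxT psi psix lam x t) (U lam x t))) /\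
  (forall lam, U lam 0 0 = Mid).

(** Y^[n]_inf(x,t) and G^[n](lam;x,t), given U^[n] and dU^[n] = d_lam U^[n](i;.,.) *)
Definition Yn (odd : bool) (U : nat -> Cx -> R -> R -> M2) (dU : nat -> R -> R -> M2)
  (n : nat) (x t : R) : M2 :=
  Yinf (MV (U n Ci x t) (c_inf odd)) (MV (dU n x t) (c_inf odd)).

Definition Gn (odd : bool) (U : nat -> Cx -> R -> R -> M2) (dU : nat -> R -> R -> M2)
  (n : nat) (lam : Cx) (x t : R) : M2 :=
  Gmat (Yn odd U dU n x t) lam.

Fixpoint prodG (odd : bool) (U : nat -> Cx -> R -> R -> M2) (dU : nat -> R -> R -> M2)
  (m : nat) (lam : Cx) (x t : R) : M2 :=
  match m with
  | O => Mid
  | S k => Mmul (Gn odd U dU k lam x t) (prodG odd U dU k lam x t)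
  end.

Definition Hm : M2 := Mscale Ci (mkM2 Cone Cone Cone Cone).
Definition Km : M2 := Mscale Ci (mkM2 Cone (Cneg Cone) (Cneg Cone) Cone).

Definition Amat (odd : bool) : M2 := if odd then Hm else Km.
Definition Bmat (odd : bool) : M2 := if odd then Km else Hm.

Definition G0formula (odd : bool) (lam : Cx) : M2 :=
  Madd Mid (Madd (Mscale (Cinv (Csub lam Ci)) (Amat odd))
                 (Mscale (Cneg (Cinv (Cadd lam Ci))) (Bmat odd))).

Fixpoint Msum1 (f : nat -> M2) (m : nat) : M2 :=
  match m with
  | O => Mscale Czero Mid
  | S k => Madd (Msum1 f k) (f (S k))
  end.

Definition Gpowformula (odd : bool) (n : nat) (lam : Cx) : M2 :=
  Madd Mid (Msum1 (fun k =>
    Mscale (Cmul (RtoC (Binomial.C n k)) (Cpow (Cmul (RtoC 2) Ci) (k - 1)))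
      (Madd (Mscale (Cinv (Cpow (Csub lam Ci) k)) (Amat odd))
            (Mscale (Cmul (Cpow (Cneg Cone) k) (Cinv (Cpow (Cadd lam Ci) k))) (Bmat odd))))
    n).

(* Main.v *)
Require Import Defs.
From Stdlib Require Import Reals.
Open Scope R_scope.
From Stdlib Require Import Lra Lia Psatz.

Lemma Cx_ext z w : Re z = Re w -> Im z = Im w -> z = w.
Proof. destruct z, w; simpl; intros; subst; reflexivity. Qed.

Lemma Cring : ring_theory Czero Cone Cadd Cmul Csub Cneg (@eq Cx).
Proof.
  constructor; intros; apply Cx_ext; simpl; ring.
Qed.
Add Ring CxRing : Cring.

Lemma M2_ext A B : e11 A = e11 B -> e12 A = e12 B -> e21 A = e21 B -> e22 A = e22 B -> A = B.
Proof. destruct A, B; simpl; intros; subst; reflexivity. Qed.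

Fixpoint CS (f : nat -> Cx) (m : nat) : Cx :=
  match m with O => Czero | S k => Cadd (CS f k) (f (S k)) end.
Fixpoint CS0 (f : nat -> Cx) (m : nat) : Cx :=
  match m with O => f O | S k => Cadd (CS0 f k) (f (S k)) end.

Lemma CS0_CS f n : CS0 f n = Cadd (f O) (CS f n).
Proof. induction n; simpl; [ring| rewrite IHn; ring]. Qed.

Lemma CS_ext f g n : (forall k, (1 <= k <= n)%nat -> f k = g k) -> CS f n = CS g n.
Proof. induction n; simpl; intros H; auto. rewrite IHn by (intros; apply H; lia). rewrite H by lia. auto. Qed.

Lemma CS_add f g n : CS (fun k => Cadd (f k) (g k)) n = Cadd (CS f n) (CS g n).
Proof. induction n; simpl; [ring| rewrite IHn; ring]. Qed.

Lemma CS_scal c f n : CS (fun k => Cmul c (f k)) n = Cmul c (CS f n).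
Proof. induction n; simpl; [ring| rewrite IHn; ring]. Qed.

Lemma CS_shift f m : CS (fun k => f (pred k)) (S m) = CS0 f m.
Proof. induction m. simpl. ring. change (CS (fun k => f (pred k)) (S (S m))) with
  (Cadd (CS (fun k => f (pred k)) (S m)) (f (S m))). rewrite IHm. reflexivity. Qed.

Lemma RtoC_add a b : RtoC (a + b) = Cadd (RtoC a) (RtoC b).
Proof. apply Cx_ext; simpl; ring. Qed.
Lemma RtoC_1 : RtoC 1 = Cone. Proof. reflexivity. Qed.

Lemma Cnn n : Binomial.C n n = 1.
Proof. unfold Binomial.C. rewrite Nat.sub_diag. simpl. 
  field. apply INR_fact_neq_0. Qed.
Lemma Cn0 n : Binomial.C n 0 = 1.
Proof. unfold Binomial.C. rewrite Nat.sub_0_r. simpl.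
  field. apply INR_fact_neq_0. Qed.

Lemma CS_S f m : CS f (S m) = Cadd (CS f m) (f (S m)).
Proof. reflexivity. Qed.
Lemma CS0_S f m : CS0 f (S m) = Cadd (CS0 f m) (f (S m)).
Proof. reflexivity. Qed.

Lemma binomC n x : CS0 (fun k => Cmul (RtoC (Binomial.C n k)) (Cpow x k)) n = Cpow (Cadd Cone x) n.
Proof.
  induction n.
  - simpl. rewrite Cnn. apply Cx_ext; simpl; ring.
  - rewrite CS0_CS. change (Cpow (Cadd Cone x) (S n)) with (Cmul (Cadd Cone x) (Cpow (Cadd Cone x) n)).
    rewrite <- IHn.
    destruct n.
    + cbn [CS0 CS Cpow]. rewrite !Cnn, !Cn0. apply Cx_ext; simpl; ring.
    + set (fN := fun k => Cmul (RtoC (Binomial.C (S n) k)) (Cpow x k)).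
      rewrite (CS_S _ (S n)).
      rewrite (CS_ext _ (fun k => Cadd (fN k) (Cmul x (fN (pred k))))).
      2:{ intros k Hk. destruct k as [|j]; [lia|]. unfold fN. simpl pred.
          rewrite <- Binomial.pascal by lia. rewrite RtoC_add. simpl Cpow. ring. }
      rewrite CS_add, CS_scal, (CS_shift fN).
      rewrite (CS0_S fN n), (CS0_CS fN n), (CS_S fN n).
      unfold fN. rewrite !Cnn, !Cn0. cbn [Cpow]. ring.
Qed.

Definition Mzero := mkM2 Czero Czero Czero Czero.
Lemma Yn0 odd : Yinf (MV Mid (c_inf odd)) (MV Mzero (c_inf odd)) = Amat odd.
Proof.
  destruct odd; apply M2_ext; apply Cx_ext; unfold Yinf, Hm, Km, Cinv, Cnorm2, VdotT, MV, Vconj, sigma2, outer, Mid, Mzero; simpl; field; lra. Qed.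
Lemma Zinf_A odd : Zinf (Amat odd) = Mscale (Cneg Cone) (Bmat odd).
Proof. destruct odd; apply M2_ext; apply Cx_ext; unfold Zinf, Hm, Km; simpl; ring. Qed.

Definition dd : Cx := Cmul (RtoC 2) Ci.
Fixpoint Rr (a : Cx) (n : nat) : Cx :=
  match n with O => Czero | S m => Cadd a (Cadd (Rr a m) (Cmul dd (Cmul a (Rr a m)))) end.

Lemma Rr_pow a n : Cadd Cone (Cmul dd (Rr a n)) = Cpow (Cadd Cone (Cmul dd a)) n.
Proof. induction n; cbn [Rr Cpow]. ring. rewrite <- IHn. ring. Qed.

Lemma dd_cancel x y : Cmul dd x = Cmul dd y -> x = y.
Proof.
  intros H. assert (H1 := f_equal Re H). assert (H2 := f_equal Im H).
  unfold dd in *; destruct x, y; simpl in *. f_equal; lra.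
Qed.

Lemma Cpow_mul x y k : Cpow (Cmul x y) k = Cmul (Cpow x k) (Cpow y k).
Proof. induction k; cbn [Cpow]. ring. rewrite IHk. ring. Qed.

Lemma sum_R a n :
  CS (fun k => Cmul (Cmul (RtoC (Binomial.C n k)) (Cpow dd (k-1))) (Cpow a k)) n = Rr a n.
Proof.
  apply dd_cancel. rewrite <- CS_scal.
  assert (E : Cmul dd (Rr a n) = Cadd (Cpow (Cadd Cone (Cmul dd a)) n) (Cneg Cone)).
  { rewrite <- Rr_pow. ring. }
  rewrite E, <- binomC, CS0_CS, Cn0. cbn [Cpow].
  rewrite (CS_ext _ (fun k => Cmul (RtoC (Binomial.C n k)) (Cpow (Cmul dd a) k))).
  - apply Cx_ext; simpl; ring.
  - intros k Hk. destruct k as [|j]; [lia|]. rewrite Cpow_mul. cbn [Cpow].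
    replace (S j - 1)%nat with j by lia. ring.
Qed.

Lemma Mmul_form odd a b r s :
  Mmul (Madd Mid (Madd (Mscale a (Amat odd)) (Mscale b (Bmat odd))))
       (Madd Mid (Madd (Mscale r (Amat odd)) (Mscale s (Bmat odd))))
  = Madd Mid (Madd (Mscale (Cadd a (Cadd r (Cmul dd (Cmul a r)))) (Amat odd))
                   (Mscale (Cadd b (Cadd s (Cmul dd (Cmul b s)))) (Bmat odd))).
Proof.
  destruct a, b, r, s, odd; apply M2_ext; apply Cx_ext;
    unfold dd, Hm, Km, Mid; simpl; ring.
Qed.

Lemma Mpow_form odd a b n :
  Mpow (Madd Mid (Madd (Mscale a (Amat odd)) (Mscale b (Bmat odd)))) n
  = Madd Mid (Madd (Mscale (Rr a n) (Amat odd)) (Mscale (Rr b n) (Bmat odd))).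
Proof.
  induction n.
  - destruct odd; apply M2_ext; apply Cx_ext; unfold Hm, Km, Mid; simpl; ring.
  - cbn [Mpow]. rewrite IHn, Mmul_form. reflexivity.
Qed.

Lemma Msum1_decomp (A B : M2) c u v m :
  Msum1 (fun k => Mscale (c k) (Madd (Mscale (u k) A) (Mscale (v k) B))) m
  = Madd (Mscale (CS (fun k => Cmul (c k) (u k)) m) A) (Mscale (CS (fun k => Cmul (c k) (v k)) m) B).
Proof.
  induction m; cbn [Msum1 CS].
  - destruct A, B; apply M2_ext; apply Cx_ext; unfold Mid; simpl; ring.
  - rewrite IHm. destruct A, B; apply M2_ext; simpl; ring.
Qed.

Lemma Cinv_mul u v : Cinv (Cmul u v) = Cmul (Cinv u) (Cinv v).
Proof.
  destruct u as [a b], v as [c e]. unfold Cinv, Cnorm2; simpl.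
  replace ((a * c - b * e) * (a * c - b * e) + (a * e + b * c) * (a * e + b * c))
    with ((a*a+b*b)*(c*c+e*e)) by ring.
  unfold Rdiv. rewrite Rinv_mult. apply Cx_ext; simpl; ring.
Qed.

Lemma Cinv_pow z k : Cinv (Cpow z k) = Cpow (Cinv z) k.
Proof.
  induction k; cbn [Cpow].
  - apply Cx_ext; unfold Cinv, Cnorm2; simpl; field.
  - rewrite Cinv_mul, IHk. reflexivity.
Qed.

Lemma deriv_const (f : Cx -> Cx) (c l z : Cx) : (forall y, f y = c) -> Cderiv_C f z l -> l = Czero.
Proof.
  intros Hf H.
  assert (Hlt : forall eps, 0 < eps -> Cmod l < eps).
  { intros eps Heps. destruct (H eps Heps) as [delta [Hd Hh]].
    specialize (Hh (mkCx (delta/2) 0)).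
    assert (Hne : mkCx (delta/2) 0 <> Czero).
    { intro E. assert (E1 := f_equal Re E). simpl in E1. lra. }
    assert (Hm : Cmod (mkCx (delta/2) 0) < delta).
    { unfold Cmod, Cnorm2; simpl.
      replace (delta / 2 * (delta / 2) + 0 * 0) with (Rsqr (delta/2)) by (unfold Rsqr; ring).
      rewrite sqrt_Rsqr by lra. lra. }
    specialize (Hh Hne Hm). rewrite !Hf in Hh.
    replace (Cmod l) with (Cmod (Csub (Cdiv (Csub c c) (mkCx (delta / 2) 0)) l)); [exact Hh|].
    unfold Cmod, Cnorm2, Cdiv, Cinv, Cnorm2; destruct c, l; simpl. f_equal. ring. }
  assert (H0 : Cmod l = 0).
  { destruct (Rle_lt_dec (Cmod l) 0) as [h|h].
    - unfold Cmod in *. pose proof (sqrt_pos (Cnorm2 l)). lra.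
    - specialize (Hlt _ h). lra. }
  unfold Cmod in H0. apply sqrt_eq_0 in H0.
  2:{ unfold Cnorm2; nra. }
  unfold Cnorm2 in H0. destruct l as [p q]; simpl in *. apply Cx_ext; simpl; nra.
Qed.

Theorem mainTheorem11 (odd : bool)
  (psi psix psixx psit : nat -> R -> R -> Cx)
  (U : nat -> Cx -> R -> R -> M2) (dU : nat -> R -> R -> M2) :
  (forall x t, psi O x t = Cone) ->
  (forall n, NLS_classical (psi n) (psix n) (psixx n) (psit n)) ->
  (forall n, FundSol (psi n) (psix n) (U n)) ->
  (forall n x t, Mderiv_C (fun lam => U n lam x t) Ci (dU n x t)) ->
  (forall n x t,
     psi (S n) x t =
     Cadd (psi n x t)
          (Cmul (Cmul (RtoC 2) Ci)
                (Csub (e12 (Yn odd U dU n x t)) (Cconj (e21 (Yn odd U dU n x t)))))) ->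
  forall (n : nat) (lam : Cx), (1 <= n)%nat -> lam <> Ci -> lam <> Cneg Ci ->
    prodG odd U dU n lam 0 0 = Mpow (Gn odd U dU O lam 0 0) n /\
    Gn odd U dU O lam 0 0 = G0formula odd lam /\
    Mpow (Gn odd U dU O lam 0 0) n = Gpowformula odd n lam.
Proof.
  intros Hpsi0 HNLS HFund HdU Hrec n lam Hn Hl1 Hl2.
  assert (HY : forall k, Yn odd U dU k 0 0 = Amat odd).
  { intro k. unfold Yn. destruct (HFund k) as [_ [_ HU]]. rewrite HU.
    assert (HdZ : dU k 0 0 = Mzero).
    { destruct (HdU k 0 0) as [h1 [h2 [h3 h4]]].
      apply M2_ext; simpl;
        [eapply deriv_const; [|exact h1] | eapply deriv_const; [|exact h2]
        |eapply deriv_const; [|exact h3] | eapply deriv_const; [|exact h4]];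
        intro y; simpl; rewrite HU; reflexivity. }
    rewrite HdZ. apply Yn0. }
  assert (HG : forall k, Gn odd U dU k lam 0 0 = Gmat (Amat odd) lam).
  { intro k. unfold Gn. rewrite HY. reflexivity. }
  assert (G0 : Gmat (Amat odd) lam = G0formula odd lam).
  { unfold Gmat, G0formula. rewrite Zinf_A.
    generalize (Cinv (Csub lam Ci)) (Cinv (Cadd lam Ci)); intros [] [].
    destruct odd; apply M2_ext; apply Cx_ext; unfold Hm, Km, Mid; simpl; ring. }
  split; [|split].
  - clear Hn. induction n; [reflexivity|]. cbn [prodG Mpow]. rewrite IHn, !HG. reflexivity.
  - rewrite HG. exact G0.
  - rewrite HG, G0. unfold G0formula. rewrite Mpow_form. unfold Gpowformula.
    rewrite Msum1_decomp. f_equal. f_equal; f_equal.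
    + rewrite <- sum_R. apply CS_ext. intros k _. rewrite Cinv_pow. unfold dd. ring.
    + rewrite <- sum_R. apply CS_ext. intros k _. rewrite Cinv_pow.
      replace (Cneg (Cinv (Cadd lam Ci))) with (Cmul (Cneg Cone) (Cinv (Cadd lam Ci))) by ring.
      rewrite Cpow_mul. unfold dd. ring.
Qed.
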